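(* For every integer $n\ge4$ there exists a hyperbolic Triakis Truncated Tetrahedron $KP_{3,3}^n$ satisfying the angle condition $\alpha+2\beta+2\gamma=2\pi$.
   Context: A hyperbolic Triakis Truncated Tetrahedron $KP_{3,3}^n$ is obtained from a hyperbolic truncated tetrahedron $TP_{3,3}$ (all faces regular: four hexagons and four triangles, with full tetrahedral symmetry) by gluing to each triangular face a pyramid $PY_3^n$ whose base is congruent to that face; $PY_3^n$ is a generalized (possibly infinite) pyramid with regular triangular base and three possibly infinite triangular sides, invariant under rotation by $2\pi/3$ about the axis through the center of the base, with dihedral angle $2\pi/n$ between adjacent sides. In the angle condition, $\alpha$ is the dihedral angle between two hexagonal faces of $TP_{3,3}$, $\beta$ the dihedral angle between a triangular and a hexagonal face of $TP_{3,3}$, and $\gamma$ the dihedral angle between base and side of $PY_3^n$. *)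

(* Defs.v *)
From HB Require Import structures.
From mathcomp Require Import all_boot all_order all_algebra all_fingroup.
From mathcomp Require Import all_classical all_reals.
From mathcomp Require Import trigo exp.
Set Implicit Arguments.
Unset Strict Implicit.
Unset Printing Implicit Defensive.
Import Order.TTheory GRing.Theory Num.Theory.
Local Open Scope ring_scope.

(* Hyperboloid (Lorentz) model of hyperbolic 3-space in R^{3,1}.           *)
(* Vectors are row vectors 'rV[R]_4, coordinate 0 is the time coordinate.  *)
Section Hyp.
Variable R : realType.
Notation vec := 'rV[R]_4.

Definition lf (x y : vec) : R :=
  \sum_(i < 4) (if (i : nat) == 0%N then -1 else 1) * x 0 i * y 0 i.

Definition inH3 (x : vec) : Prop := lf x x = -1 /\ 0 < x 0 0.

(* hyperbolic distance: cosh d(x,y) = - <x,y>, i.e. d = arcosh(-<x,y>) *)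
Definition hdist (x y : vec) : R :=
  let t := - lf x y in ln (t + Num.sqrt (t ^+ 2 - 1)).

(* angle at vertex v (in H^3) between the geodesic segments [v,u] and [v,w]:
   angle between the tangent vectors u + <u,v> v and w + <w,v> v at v *)
Definition hangle (v u w : vec) : R :=
  let tu := u + lf u v *: v in
  let tw := w + lf w v *: v in
  acos (lf tu tw / Num.sqrt (lf tu tu * lf tw tw)).

(* isometries of H^3: linear maps of R^{3,1} (acting on row vectors) that
   preserve the Lorentz form and the upper sheet (the group O^+(3,1)) *)
Definition hisometry (A : 'M[R]_4) : Prop :=
  (forall x y : vec, lf (x *m A) (y *m A) = lf x y) /\
  (forall x : vec, inH3 x -> inH3 (x *m A)).

Definition unit_spacelike (n : vec) : Prop := lf n n = 1.

(* interior dihedral angle between two faces with outward unit normals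
   nF, nG (polyhedron on the side <x,nF> <= 0, <x,nG> <= 0) *)
Definition dihedral (nF nG : vec) : R := acos (- lf nF nG).

(* Combinatorics: the tetrahedron has vertices i : 'I_4; the truncated     *)
(* tetrahedron has 12 vertices v i j (i <> j), the vertex lying on the      *)
(* tetrahedron edge ij near i.  Triangle face i = {v i j | j <> i};         *)
(* hexagonal face k (opposite tetrahedron vertex k) = {v i j | i,j <> k}.   *)
(* Edges: triangle edges v i j -- v i l, hex-hex edges v i j -- v j i.      *)
(* nt i (resp. nh k) is the outward unit normal of triangle i (hexagon k). *)
Definition is_TP (v : 'I_4 -> 'I_4 -> vec) (nt nh : 'I_4 -> vec) : Prop :=
  (forall i j, i != j -> inH3 (v i j)) /\
  (forall i, unit_spacelike (nt i) /\
     forall i' j, i' != j ->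
       (i' == i -> lf (nt i) (v i' j) = 0) /\
       (i' != i -> lf (nt i) (v i' j) < 0)) /\
  (forall k, unit_spacelike (nh k) /\
     forall i j, i != j ->
       ((i != k) && (j != k) -> lf (nh k) (v i j) = 0) /\
       ((i == k) || (j == k) -> lf (nh k) (v i j) < 0)) /\
  (forall i, exists a, 0 < a /\ exists th,
     forall j l m, [&& i != j, i != l, i != m, j != l, j != m & l != m] ->
       hdist (v i j) (v i l) = a /\ hangle (v i j) (v i l) (v i m) = th) /\
  (* (2) the hexagonal faces are regular (equal sides, equal angles);
     the hexagon k is v i j, v j i, v j l, v l j, v l i, v i l
     where {i,j,l} = 'I_4 \ {k} *)
  (forall k, exists a, 0 < a /\ exists th,
     forall i j l, [&& i != j, i != l, j != l, i != k, j != k & l != k] ->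
       [/\ hdist (v i j) (v j i) = a, hdist (v i j) (v i l) = a
         & hangle (v i j) (v j i) (v i l) = th]) /\
  (forall s : {perm 'I_4}, exists A, hisometry A /\
     forall i j, i != j -> v i j *m A = v (s i) (s j)).

(* Base vertices b k (k : 'I_3), apex p given as a nonzero vector of       *)
(* R^{3,1}, i.e. a projective point that may be proper (timelike), ideal   *)
(* (lightlike) or hyperideal (spacelike) -- "possibly infinite" pyramid;   *)
(* its sign is normalized by <p, b k> < 0.  n0 is the outward unit normal  *)
(* of the base, m k that of the side through b (k+1), b (k+2) and p.       *)
Definition nxt (k : 'I_3) : 'I_3 := ordS k.

Definition is_PY (n : nat) (b : 'I_3 -> vec) (p : vec) (n0 : vec)
    (m : 'I_3 -> vec) : Prop :=
  (forall k, inH3 (b k) /\ lf p (b k) < 0) /\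
  (exists a, 0 < a /\ exists th, forall k,
     hdist (b k) (b (nxt k)) = a /\ hangle (b k) (b (nxt k)) (b (nxt (nxt k))) = th) /\
  unit_spacelike n0 /\ (forall k, lf n0 (b k) = 0) /\ lf n0 p < 0 /\
  (forall k, [/\ unit_spacelike (m k), lf (m k) (b (nxt k)) = 0,
                lf (m k) (b (nxt (nxt k))) = 0, lf (m k) p = 0
              & lf (m k) (b k) < 0]) /\
  (exists A, hisometry A /\ p *m A = p /\ forall k, b k *m A = b (nxt k)) /\
  (forall k l, k != l -> dihedral (m k) (m l) = 2 * pi / n%:R).

(* Triakis truncated tetrahedron KP_{3,3}^n: a TP_{3,3} together with a     *)
(* PY_3^n whose base is congruent to each triangular face (a congruent copy *)
(* of the pyramid is glued on every triangular face).                       *)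
Definition base_congruent (b : 'I_3 -> vec) (v : 'I_4 -> 'I_4 -> vec)
    (i : 'I_4) : Prop :=
  exists A, hisometry A /\ exists f : 'I_3 -> 'I_4,
    injective f /\ (forall k, f k != i) /\ forall k, b k *m A = v i (f k).

Definition is_KP (n : nat) (v : 'I_4 -> 'I_4 -> vec) (nt nh : 'I_4 -> vec)
    (b : 'I_3 -> vec) (p n0 : vec) (m : 'I_3 -> vec) : Prop :=
  is_TP v nt nh /\ is_PY n b p n0 m /\ forall i, base_congruent b v i.

(* the angle condition alpha + 2 beta + 2 gamma = 2 pi, where alpha is the
   dihedral angle between two hexagonal faces of TP, beta the one between a
   triangular and a hexagonal face of TP, gamma the one between base and
   side of PY (each is the same along all such edges) *)
Definition angle_condition (nt nh : 'I_4 -> vec) (n0 : vec)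
    (m : 'I_3 -> vec) : Prop :=
  exists alpha beta gamma : R,
    (forall k l, k != l -> dihedral (nh k) (nh l) = alpha) /\
    (forall i k, i != k -> dihedral (nt i) (nh k) = beta) /\
    (forall k, dihedral n0 (m k) = gamma) /\
    alpha + 2 * beta + 2 * gamma = 2 * pi.

End Hyp.

(* Main.v *)
Require Import Defs.
From HB Require Import structures.
From mathcomp Require Import all_boot all_order all_algebra all_fingroup.
From mathcomp Require Import all_classical all_reals.
From mathcomp Require Import trigo exp.
From mathcomp Require Import ring lra.
Set Implicit Arguments.
Unset Strict Implicit.
Unset Printing Implicit Defensive.
Import Order.TTheory GRing.Theory Num.Theory.
Local Open Scope ring_scope.

Section Gen.
Variable R : realType.
Notation vec := 'rV[R]_4.

Lemma lfC (x y : vec) : lf x y = lf y x.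
Proof. by apply: eq_bigr => i _; rewrite -!mulrA [y 0 i * _]mulrC. Qed.

Lemma lfDl (x y z : vec) : lf (x + y) z = lf x z + lf y z.
Proof. by rewrite /lf -big_split; apply: eq_bigr => i _; rewrite /= !mxE; ring. Qed.

Lemma lfZl a (x z : vec) : lf (a *: x) z = a * lf x z.
Proof. by rewrite /lf mulr_sumr; apply: eq_bigr => i _; rewrite !mxE; ring. Qed.

Lemma lfDr (x y z : vec) : lf z (x + y) = lf z x + lf z y.
Proof. by rewrite lfC lfDl !(lfC z). Qed.

Lemma lfZr a (x z : vec) : lf z (a *: x) = a * lf z x.
Proof. by rewrite lfC lfZl lfC. Qed.

Definition Em : 'M[R]_4 := \matrix_(i, j)
  (if ((i : nat) == 0%N) || ((j : nat) == 0%N) || (i == j) then 2^-1 else - 2^-1).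

Definition Qf (x y : vec) : R :=
  \sum_(k < 4) x 0 k * y 0 k - 2^-1 * (\sum_(k < 4) x 0 k) * (\sum_(k < 4) y 0 k).

Lemma lfE (x y : vec) : lf (x *m Em) (y *m Em) = Qf x y.
Proof.
rewrite /lf /Qf.
rewrite !big_ord_recr !big_ord0 /= !mxE /= !big_ord_recr !big_ord0 /= !mxE /=.
by field.
Qed.

Lemma EmE : Em *m Em = 1%:M.
Proof.
apply/matrixP => i j; rewrite !mxE !big_ord_recr !big_ord0 /= !mxE.
case: i => [[|[|[|[|i]]]] hi] //; case: j => [[|[|[|[|j]]]] hj] //=; try by field.
Qed.

Lemma Em00 (z : vec) : (z *m Em) 0 0 = 2^-1 * \sum_(k < 4) z 0 k.
Proof. rewrite !mxE !big_ord_recr !big_ord0 /= !mxE /=; by field. Qed.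

End Gen.
Section Gen2.
Variable R : realType.
Notation vec := 'rV[R]_4.

Definition wv (a : R) (i : 'I_4) (c : R) (j : 'I_4) (d : R) : vec :=
  \row_k (a * (k == i)%:R + c * (k == j)%:R + d).

Lemma sum1 (i : 'I_4) : \sum_(k < 4) (k == i)%:R = 1 :> R.
Proof.
rewrite (bigD1 i) //= eqxx big1 ?addr0 // => k /negPf -> //.
Qed.

Lemma sum2 (i i' : 'I_4) : \sum_(k < 4) ((k == i)%:R * (k == i')%:R) = (i == i')%:R :> R.
Proof.
rewrite (bigD1 i) //= eqxx mul1r big1 ?addr0 // => k /negPf ->; by rewrite mul0r.
Qed.

Lemma sum_wv a i c j d : \sum_(k < 4) (wv a i c j d) 0 k = a + c + 4%:R * d.
Proof.
rewrite /wv; under eq_bigr do rewrite mxE.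
rewrite !big_split /= -!mulr_sumr !sum1 sumr_const card_ord; ring.
Qed.

Lemma Qf_wv a i c j d a' i' c' j' d' :
  Qf (wv a i c j d) (wv a' i' c' j' d') =
  a * a' * (i == i')%:R + a * c' * (i == j')%:R + c * a' * (j == i')%:R
  + c * c' * (j == j')%:R + (a + c) * d' + d * (a' + c') + 4%:R * d * d'
  - 2^-1 * (a + c + 4%:R * d) * (a' + c' + 4%:R * d').
Proof.
rewrite /Qf !sum_wv.
have -> : \sum_(k < 4) (wv a i c j d) 0 k * (wv a' i' c' j' d') 0 k =
  \sum_(k < 4) (a * a' * ((k == i)%:R * (k == i')%:R) + a * c' * ((k == i)%:R * (k == j')%:R)
   + c * a' * ((k == j)%:R * (k == i')%:R) + c * c' * ((k == j)%:R * (k == j')%:R)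
   + a * d' * (k == i)%:R + c * d' * (k == j)%:R + d * a' * (k == i')%:R
   + d * c' * (k == j')%:R + d * d').
  by apply: eq_bigr => k _; rewrite !mxE; ring.
rewrite !big_split /= -!mulr_sumr !sum2 !sum1 sumr_const card_ord; ring.
Qed.

Lemma lf_wv a i c j d a' i' c' j' d' :
  lf (wv a i c j d *m Em R) (wv a' i' c' j' d' *m Em R) =
  a * a' * (i == i')%:R + a * c' * (i == j')%:R + c * a' * (j == i')%:R
  + c * c' * (j == j')%:R + (a + c) * d' + d * (a' + c') + 4%:R * d * d'
  - 2^-1 * (a + c + 4%:R * d) * (a' + c' + 4%:R * d').
Proof. by rewrite lfE Qf_wv. Qed.

Lemma mulperm (x : vec) (s : {perm 'I_4}) k : (x *m perm_mx s) 0 k = x 0 (s^-1%g k).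
Proof. by have := col_permE s^-1%g x; rewrite invgK => <-; rewrite mxE. Qed.

Lemma wv_perm a i c j d (s : {perm 'I_4}) :
  wv a i c j d *m perm_mx s = wv a (s i) c (s j) d.
Proof.
apply/rowP => k; rewrite mulperm !mxE.
have E : forall l, (s^-1%g k == l) = (k == s l).
  by move=> l; rewrite -(inj_eq (@perm_inj _ s)) permKV.
by rewrite !E.
Qed.

Lemma Qf_perm (x y : vec) (s : {perm 'I_4}) :
  Qf (x *m perm_mx s) (y *m perm_mx s) = Qf x y.
Proof.
rewrite /Qf.
have H : forall F : 'I_4 -> R, \sum_(k < 4) F (s^-1%g k) = \sum_(k < 4) F k.
  by move=> F; rewrite (reindex_inj (@perm_inj _ s)) /=; apply: eq_bigr => k _; rewrite permK.
under eq_bigr do rewrite !mulperm.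
rewrite (H (fun k => x 0 k * y 0 k)).
under [X in _ - _ * X * _]eq_bigr do rewrite mulperm.
under [X in _ - _ * _ * X]eq_bigr do rewrite mulperm.
by rewrite (H (fun k => x 0 k)) (H (fun k => y 0 k)).
Qed.

Definition Aperm (s : {perm 'I_4}) : 'M[R]_4 := Em R *m perm_mx s *m Em R.

Lemma Aperm_iso s : hisometry (Aperm s).
Proof.
have L : forall x y : vec, lf (x *m Aperm s) (y *m Aperm s) = lf x y.
  move=> x y; rewrite /Aperm !mulmxA lfE Qf_perm -lfE -!mulmxA EmE !mulmx1 //.
split=> // x [hx1 hx0]; split; first by rewrite L.
rewrite /Aperm !mulmxA Em00.
have H : forall F : 'I_4 -> R, \sum_(k < 4) F (s^-1%g k) = \sum_(k < 4) F k.
  by move=> F; rewrite (reindex_inj (@perm_inj _ s)) /=; apply: eq_bigr => k _; rewrite permK.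
under eq_bigr do rewrite mulperm.
rewrite (H (fun k => (x *m Em R) 0 k)) -Em00 -mulmxA EmE mulmx1 //.
Qed.

Lemma wvE_perm a i c j d s :
  wv a i c j d *m Em R *m Aperm s = wv a (s i) c (s j) d *m Em R.
Proof. by rewrite /Aperm !mulmxA -(mulmxA _ (Em R) (Em R)) EmE mulmx1 wv_perm. Qed.

End Gen2.
Ltac genb0 := repeat match goal with |- context [(?a == ?c)%:R] => generalize ((a == c)%:R); intro end.

Ltac genb := repeat match goal with |- context [(?a == ?c)%:R] => case: (a == c) => /= end.

Section Constr.
Variable R : realType.
Notation vec := 'rV[R]_4.
Variables (b g : R).
Hypothesis hb : 0 < b.
Hypothesis hg : 0 < g.
Hypothesis hrel : 4%:R * g ^+ 2 + 6%:R * b * g = 1 + b ^+ 2 / 2%:R.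

Definition q := b ^+ 2.
Definition S := 3%:R * b + 4%:R * g.
Definition vv (i j : 'I_4) : vec := wv (2%:R * b) i b j g *m Em R.
Definition nhr (k : 'I_4) : vec := wv (- S) k 0 k (g + 3%:R * b / 2%:R) *m Em R.
Definition ntr (i : 'I_4) : vec := wv S i 0 i (b / 2%:R - g) *m Em R.
Definition Ur (j : 'I_4) : vec :=
  wv (b * (1 - q)) ord0 ((3%:R + 2%:R * q) * b) j (- (q * g) - (1 + q) * b) *m Em R.
Definition cv : vec := wv (5%:R * b) ord0 0 ord0 (b + 3%:R * g) *m Em R.

Lemma hrel2 : 4%:R * g * g + 6%:R * b * g = 1 + b * b / 2%:R.
Proof. have := hrel; rewrite !expr2; lra. Qed.

Lemma lf_vv i j k l : lf (vv i j) (vv k l) =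
  - 1 - 5%:R * q + 4%:R * q * (i == k)%:R + 2%:R * q * (i == l)%:R
  + 2%:R * q * (j == k)%:R + q * (j == l)%:R.
Proof.
rewrite /vv lf_wv /q.
genb; rewrite ?expr2; have := hrel2; nra.
Qed.

Lemma lf_nhv k i j : lf (nhr k) (vv i j) = - S * b * (2%:R * (k == i)%:R + (k == j)%:R).
Proof.
rewrite /vv /nhr lf_wv /S.
genb; rewrite ?expr2; have := hrel2; nra.
Qed.

Lemma lf_ntv i i' j : lf (ntr i) (vv i' j) = S * b * (2%:R * (i == i')%:R + (i == j)%:R - 2%:R).
Proof.
rewrite /vv /ntr lf_wv /S.
genb; rewrite ?expr2; have := hrel2; nra.
Qed.

Lemma S2 : S ^+ 2 = 11%:R * q + 4%:R.
Proof. rewrite /S /q; rewrite ?expr2; have := hrel2; nra. Qed.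

Lemma lf_nhnh k l : lf (nhr k) (nhr l) = (4%:R + 11%:R * q) * (k == l)%:R - 1 - 5%:R * q.
Proof.
rewrite /nhr lf_wv /S /q.
case: (k == l) => /=; rewrite ?expr2; have := hrel2; nra.
Qed.

Lemma lf_ntnt i l : lf (ntr i) (ntr l) = (4%:R + 11%:R * q) * (i == l)%:R - 1 - 9%:R * q.
Proof.
rewrite /ntr lf_wv /S /q.
case: (i == l) => /=; rewrite ?expr2; have := hrel2; nra.
Qed.

Lemma lf_ntnh i k : lf (ntr i) (nhr k) = - (4%:R + 11%:R * q) * (i == k)%:R + 1 - q.
Proof.
rewrite /ntr /nhr lf_wv /S /q.
case: (i == k) => /=; rewrite ?expr2; have := hrel2; nra.
Qed.

End Constr.
Section Constr2.
Variable R : realType.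
Notation vec := 'rV[R]_4.
Variables (b g : R).
Hypothesis hb : 0 < b.
Hypothesis hg : 0 < g.
Hypothesis hrel : 4%:R * g ^+ 2 + 6%:R * b * g = 1 + b ^+ 2 / 2%:R.

Let hrel2 := hrel2 hrel.
Let hrel3 : b * b * (4%:R * g * g + 6%:R * b * g) = b * b * (1 + b * b / 2%:R).
Proof. by rewrite hrel2. Qed.
Let hrel4 : b * b * b * b * (4%:R * g * g + 6%:R * b * g) = b * b * b * b * (1 + b * b / 2%:R).
Proof. by rewrite hrel2. Qed.

Ltac simpl0 := rewrite ?eqxx /=; try (rewrite [ord0 == _]eq_sym); rewrite ?(negPf _).

Lemma lf_Uv j l : j != ord0 -> l != ord0 ->
  lf (Ur b g j) (vv b g ord0 l) = q b * (2%:R * q b + 3%:R) * (j == l)%:R.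
Proof.
move=> hj hl; rewrite /Ur /vv lf_wv /q !eqxx (negPf hj) eq_sym (negPf hl) /=.
case: (j == l) => /=; rewrite ?expr2; have := hrel2; have := hrel3; have := hrel4; nra.
Qed.

Lemma lf_UUe j : j != ord0 ->
  lf (Ur b g j) (Ur b g j) = q b * (q b + 2%:R) * (2%:R * q b + 3%:R).
Proof.
move=> hj; rewrite /Ur lf_wv /q !eqxx (negPf hj) eq_sym (negPf hj) /=.
rewrite ?expr2; have := hrel2; have := hrel3; have := hrel4; nra.
Qed.

Lemma lf_UUn j l : j != ord0 -> l != ord0 -> j != l ->
  lf (Ur b g j) (Ur b g l) = - (1 + q b) * q b * (2%:R * q b + 3%:R).
Proof.
move=> hj hl hjl; rewrite /Ur lf_wv /q !eqxx (negPf hj) (negPf hjl) eq_sym (negPf hl) /=.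
rewrite ?expr2; have := hrel2; have := hrel3; have := hrel4; nra.
Qed.

Lemma lf_Unt j : j != ord0 -> lf (Ur b g j) (ntr b g ord0) = 0.
Proof.
move=> hj; rewrite /Ur /ntr lf_wv /q /S !eqxx (negPf hj) /=.
rewrite ?expr2; have := hrel2; have := hrel3; have := hrel4; nra.
Qed.

Lemma lf_cv l : l != ord0 -> lf (cv b g) (vv b g ord0 l) = - 3%:R - 2%:R * q b.
Proof.
move=> hl; rewrite /cv /vv lf_wv /q !eqxx eq_sym (negPf hl) /=.
rewrite ?expr2; have := hrel2; have := hrel3; have := hrel4; nra.
Qed.

Lemma lf_ntc : lf (ntr b g ord0) (cv b g) = 0.
Proof.
rewrite /cv /ntr lf_wv /q /S !eqxx /=.
rewrite ?expr2; have := hrel2; have := hrel3; have := hrel4; nra.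
Qed.

Lemma lf_Uc j : j != ord0 -> lf (Ur b g j) (cv b g) = q b * (2%:R * q b + 3%:R).
Proof.
move=> hj; rewrite /Ur /cv lf_wv /q !eqxx (negPf hj) /=.
rewrite ?expr2; have := hrel2; have := hrel3; have := hrel4; nra.
Qed.

End Constr2.
Section Gen3.
Variable R : realType.
Notation vec := 'rV[R]_4.

Lemma hangleE (v u w : vec) : hangle v u w =
  acos ((lf u w + 2%:R * lf u v * lf w v + lf u v * lf w v * lf v v) /
   Num.sqrt ((lf u u + 2%:R * lf u v ^+ 2 + lf u v ^+ 2 * lf v v) *
             (lf w w + 2%:R * lf w v ^+ 2 + lf w v ^+ 2 * lf v v))).
Proof.
rewrite /hangle; congr acos.
rewrite !lfDl !lfDr !lfZl !lfZr (lfC v u) (lfC v w) ?(lfC w u).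
congr (_ / Num.sqrt (_ * _)); ring.
Qed.

End Gen3.

Ltac bsimp := rewrite ?eqxx /=; repeat match goal with
 | H : is_true (?x != ?y) |- context [?x == ?y] => rewrite (negPf H) /=
 | H : is_true (?x != ?y) |- context [?y == ?x] => rewrite [y == x]eq_sym (negPf H) /=
 end.

Section Constr3.
Variable R : realType.
Notation vec := 'rV[R]_4.
Variables (b g : R).
Hypothesis hb : 0 < b.
Hypothesis hg : 0 < g.
Hypothesis hrel : 4%:R * g ^+ 2 + 6%:R * b * g = 1 + b ^+ 2 / 2%:R.

Definition Tn := 3%:R + 2%:R * q b.
Definition Hn := 3%:R + 6%:R * q b.
Definition Nn := q b * (q b + 2%:R) * (2%:R * q b + 3%:R).
Definition ntv i : vec := (Num.sqrt Tn)^-1 *: ntr b g i.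
Definition nhv k : vec := (Num.sqrt Hn)^-1 *: nhr b g k.
Definition uv j : vec := (Num.sqrt Nn)^-1 *: Ur b g j.
Definition Gv : R := Num.sqrt (11%:R * q b + 4%:R) /
       (Num.sqrt 2%:R * (2%:R * q b + 1) * Num.sqrt (3%:R + 2%:R * q b)).
Definition sg : R := Num.sqrt (1 - Gv ^+ 2).
Definition mv j : vec := (- Gv) *: ntv ord0 + (- sg) *: uv j.
Definition pv : vec := (Gv * Num.sqrt Nn) *: cv b g + (- (sg * q b * (2%:R * q b + 3%:R))) *: ntv ord0.

Lemma qp : 0 < q b. Proof. by rewrite /q exprn_gt0. Qed.
Lemma Tp : 0 < Tn. Proof. have := qp; rewrite /Tn; lra. Qed.
Lemma Hp : 0 < Hn. Proof. have := qp; rewrite /Hn; lra. Qed.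
Lemma Np : 0 < Nn. Proof. have := qp; rewrite /Nn => h; apply: mulr_gt0; [apply: mulr_gt0|]; lra. Qed.

Lemma invsq (x y : R) : 0 < x -> (Num.sqrt x)^-1 * ((Num.sqrt x)^-1 * y) = y / x.
Proof. by move=> hx; rewrite mulrA -expr2 exprVn sqr_sqrtr ?ltW // mulrC. Qed.

Lemma L_ntnt i : lf (ntv i) (ntv i) = 1.
Proof.
rewrite /ntv lfZl lfZr invsq ?Tp // lf_ntnt // eqxx /= /Tn; have := qp => h.
field; lra.
Qed.

Lemma L_nhnh_eq k : lf (nhv k) (nhv k) = 1.
Proof.
rewrite /nhv lfZl lfZr invsq ?Hp // lf_nhnh // eqxx /= /Hn; have := qp => h.
field; lra.
Qed.

Lemma L_nhnh k l : k != l -> lf (nhv k) (nhv l) = - ((5%:R * q b + 1) / (6%:R * q b + 3%:R)).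
Proof.
move=> hkl; rewrite /nhv lfZl lfZr invsq ?Hp // lf_nhnh // (negPf hkl) /= /Hn; have := qp => h.
field; lra.
Qed.

Lemma L_ntnh i k : i != k -> lf (ntv i) (nhv k) =
  - ((q b - 1) / (Num.sqrt (3%:R + 2%:R * q b) * Num.sqrt (3%:R + 6%:R * q b))).
Proof.
move=> hik; rewrite /nhv /ntv lfZl lfZr lf_ntnh // (negPf hik) /= /Tn /Hn.
have := qp => h.
have h1 : 0 < Num.sqrt (3%:R + 2%:R * q b) by rewrite sqrtr_gt0; lra.
have h2 : 0 < Num.sqrt (3%:R + 6%:R * q b) by rewrite sqrtr_gt0; lra.
field; do ?(apply/andP; split); lra.
Qed.

Let hrel2 := hrel2 hrel.

Lemma sNp : 0 < Num.sqrt Nn. Proof. by rewrite sqrtr_gt0 Np. Qed.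
Lemma sTp : 0 < Num.sqrt Tn. Proof. by rewrite sqrtr_gt0 Tp. Qed.
Lemma sHp : 0 < Num.sqrt Hn. Proof. by rewrite sqrtr_gt0 Hp. Qed.

Lemma L_uu j : j != ord0 -> lf (uv j) (uv j) = 1.
Proof.
move=> hj; rewrite /uv lfZl lfZr invsq ?Np // lf_UUe //.
by rewrite -/Nn divff // lt0r_neq0 // Np.
Qed.

Lemma L_uun j l : j != ord0 -> l != ord0 -> j != l ->
  lf (uv j) (uv l) = - (1 + q b) / (q b + 2%:R).
Proof.
move=> hj hl hjl; rewrite /uv lfZl lfZr invsq ?Np // lf_UUn // /Nn.
have := qp => h; field; do ?(apply/andP; split); lra.
Qed.

Lemma L_unt j : j != ord0 -> lf (uv j) (ntv ord0) = 0.
Proof. by move=> hj; rewrite /uv /ntv lfZl lfZr lf_Unt // !mulr0. Qed.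

Lemma L_ntv0 l : l != ord0 -> lf (ntv ord0) (vv b g ord0 l) = 0.
Proof.
move=> hl; rewrite /ntv lfZl lf_ntv // eqxx eq_sym (negPf hl) /=.
ring.
Qed.

Lemma L_uv j l : j != ord0 -> l != ord0 ->
  lf (uv j) (vv b g ord0 l) = (Num.sqrt Nn)^-1 * (q b * (2%:R * q b + 3%:R) * (j == l)%:R).
Proof. by move=> hj hl; rewrite /uv lfZl lf_Uv. Qed.

Lemma L_ntc : lf (ntv ord0) (cv b g) = 0.
Proof. by rewrite /ntv lfZl lf_ntc // mulr0. Qed.

Lemma L_uc j : j != ord0 -> lf (uv j) (cv b g) = (Num.sqrt Nn)^-1 * (q b * (2%:R * q b + 3%:R)).
Proof. by move=> hj; rewrite /uv lfZl lf_Uc. Qed.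

Lemma Gv2 : Gv ^+ 2 = (11%:R * q b + 4%:R) / (2%:R * (2%:R * q b + 1) ^+ 2 * (3%:R + 2%:R * q b)).
Proof.
have := qp => h.
rewrite /Gv expr_div_n !exprMn !sqr_sqrtr //; lra.
Qed.

Lemma Gv_gt0 : 0 < Gv.
Proof.
have := qp => h; rewrite /Gv; apply: divr_gt0; first by rewrite sqrtr_gt0; lra.
apply: mulr_gt0; last by rewrite sqrtr_gt0; lra.
apply: mulr_gt0; last by lra.
by rewrite sqrtr_gt0; lra.
Qed.

Lemma Gv2_lt1 : Gv ^+ 2 < 1.
Proof.
have := qp => h; rewrite Gv2.
rewrite ltr_pdivrMr; last by rewrite expr2; apply: mulr_gt0; [apply: mulr_gt0|]; nra.
rewrite mul1r expr2; nra.
Qed.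

Lemma sg2 : sg ^+ 2 = 1 - Gv ^+ 2.
Proof. rewrite /sg sqr_sqrtr //; have := Gv2_lt1; lra. Qed.

Lemma sg_gt0 : 0 < sg.
Proof. rewrite /sg sqrtr_gt0; have := Gv2_lt1; lra. Qed.

Lemma L_mm j : j != ord0 -> lf (mv j) (mv j) = 1.
Proof.
move=> hj; rewrite /mv !lfDl !lfDr !(lfZl (- Gv)) !(lfZl (- sg)) !(lfZr (- Gv)) !(lfZr (- sg)) L_ntnt L_uu // L_unt // (lfC (ntv _)) L_unt //.
have := sg2; have := Gv2; rewrite !expr2 => _ h; lra.
Qed.

Lemma L_mmn j l : j != ord0 -> l != ord0 -> j != l ->
  lf (mv j) (mv l) = - ((8%:R * q b ^+ 2 - 1) / (2%:R * (2%:R * q b + 1) ^+ 2)).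
Proof.
move=> hj hl hjl; rewrite /mv !lfDl !lfDr !(lfZl (- Gv)) !(lfZl (- sg)) !(lfZr (- Gv)) !(lfZr (- sg)) L_ntnt L_uun // L_unt // (lfC (ntv _)) L_unt //.
have -> : - Gv * (- Gv * 1) + - Gv * (- sg * 0) + (- sg * (- Gv * 0) + - sg * (- sg * (- (1 + q b) / (q b + 2%:R))))
  = Gv ^+ 2 + sg ^+ 2 * (- (1 + q b) / (q b + 2%:R)) by rewrite !expr2; ring.
rewrite sg2 Gv2; have := qp => h.
field; rewrite ?expr2; do ?(apply/andP; split); nra.
Qed.

Lemma L_ntm j : j != ord0 -> lf (ntv ord0) (mv j) = - Gv.
Proof.
move=> hj; rewrite /mv !lfDr !(lfZr (- Gv)) !(lfZr (- sg)) L_ntnt (lfC (ntv _)) L_unt //; ring.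
Qed.

Lemma L_mvv j l : j != ord0 -> l != ord0 -> j != l -> lf (mv j) (vv b g ord0 l) = 0.
Proof.
move=> hj hl hjl; rewrite /mv !lfDl !(lfZl (- Gv)) !(lfZl (- sg)) L_ntv0 // L_uv // (negPf hjl) /=; ring.
Qed.

Lemma L_mvvj j : j != ord0 -> lf (mv j) (vv b g ord0 j) < 0.
Proof.
move=> hj; rewrite /mv !lfDl !(lfZl (- Gv)) !(lfZl (- sg)) L_ntv0 // L_uv // eqxx /= mulr0 add0r mulr1 mulNr oppr_lt0.
have := qp => h; apply: mulr_gt0; first exact: sg_gt0.
apply: mulr_gt0; first by rewrite invr_gt0 sNp.
apply: mulr_gt0 => //; lra.
Qed.

Lemma L_mp j : j != ord0 -> lf (mv j) pv = 0.
Proof.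
move=> hj; rewrite /mv /pv !lfDl !lfDr !(lfZl (- Gv)) !(lfZl (- sg)) !(lfZr (Gv * Num.sqrt Nn)) !(lfZr (- (sg * q b * (2%:R * q b + 3%:R)))) L_ntnt L_ntc L_uc // L_unt //.
have := sNp => h; field; lra.
Qed.

Lemma L_pv l : l != ord0 -> lf pv (vv b g ord0 l) < 0.
Proof.
move=> hl; rewrite /pv !lfDl !(lfZl (Gv * Num.sqrt Nn)) !(lfZl (- (sg * q b * (2%:R * q b + 3%:R)))) L_ntv0 // lf_cv // mulr0 addr0.
have := qp => h; have := Gv_gt0 => h1; have := sNp => h2.
have h3 : 0 < Gv * Num.sqrt Nn by apply: mulr_gt0.
nra.
Qed.

Lemma L_ntp : lf (ntv ord0) pv < 0.
Proof.
rewrite /pv !lfDr !(lfZr (Gv * Num.sqrt Nn)) !(lfZr (- (sg * q b * (2%:R * q b + 3%:R)))) L_ntc L_ntnt mulr0 add0r mulr1 oppr_lt0.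
have := qp => h; apply: mulr_gt0; first apply: mulr_gt0; [exact: sg_gt0 | done | lra].
Qed.

End Constr3.
Section Trig.
Variable R : realType.

Lemma sq_eq (x y : R) : 0 <= x -> 0 <= y -> x ^+ 2 = y ^+ 2 -> x = y.
Proof. move=> hx hy; rewrite !expr2 => h; apply/eqP; rewrite eq_le; apply/andP; split; nra. Qed.

Lemma sqrt2e (x : R) : 0 <= x -> Num.sqrt x * Num.sqrt x = x.
Proof. by move=> h; rewrite -expr2 sqr_sqrtr. Qed.

Lemma angle_main (q : R) : 0 < q ->
  acos ((5%:R * q + 1) / (6%:R * q + 3%:R))
  + 2%:R * acos ((q - 1) / (Num.sqrt (3%:R + 2%:R * q) * Num.sqrt (3%:R + 6%:R * q)))
  + 2%:R * acos (Num.sqrt (11%:R * q + 4%:R) /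
       (Num.sqrt 2%:R * (2%:R * q + 1) * Num.sqrt (3%:R + 2%:R * q))) = 2%:R * pi.
Proof.
move=> hq.
set r := Num.sqrt (11%:R * q + 4%:R).
set t := Num.sqrt (3%:R + 2%:R * q).
set u := Num.sqrt (3%:R + 6%:R * q).
set s2 := Num.sqrt (2%:R : R).
pose v := Num.sqrt (q + 2%:R).
have r2 : r * r = 11%:R * q + 4%:R by rewrite sqrt2e //; lra.
have t2 : t * t = 3%:R + 2%:R * q by rewrite sqrt2e //; lra.
have u2 : u * u = 3%:R + 6%:R * q by rewrite sqrt2e //; lra.
have s22 : s2 * s2 = 2%:R by rewrite sqrt2e //; lra.
have v2 : v * v = q + 2%:R by rewrite sqrt2e //; lra.
have rp : 0 < r by rewrite sqrtr_gt0; lra.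
have tp : 0 < t by rewrite sqrtr_gt0; lra.
have up : 0 < u by rewrite sqrtr_gt0; lra.
have s2p : 0 < s2 by rewrite sqrtr_gt0; lra.
have vp : 0 < v by rewrite sqrtr_gt0; lra.
set A := (5%:R * q + 1) / (6%:R * q + 3%:R).
set B := (q - 1) / (t * u).
set G := r / (s2 * (2%:R * q + 1) * t).
have hA1 : A * (6%:R * q + 3%:R) = 5%:R * q + 1 by rewrite /A; field; lra.
have hA : -1 <= A <= 1 by apply/andP; split; nra.
have hB1 : B * (t * u) = q - 1 by rewrite /B; field; do ?(apply/andP; split); lra.
have hB2 : B * B = (q - 1) * (q - 1) / ((3%:R + 2%:R * q) * (3%:R + 6%:R * q)).
  by rewrite -t2 -u2 /B; field; do ?(apply/andP; split); lra.
have hsa2 : (r * v / (t * u)) ^+ 2 = (11%:R * q + 4%:R) * (q + 2%:R) / ((3%:R + 2%:R * q) * (3%:R + 6%:R * q)).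
  by rewrite -r2 -v2 -t2 -u2; field; do ?(apply/andP; split); lra.
have hBB : 1 - B ^+ 2 = (r * v / (t * u)) ^+ 2.
  by rewrite hsa2 expr2 hB2; field; do ?(apply/andP; split); nra.
have hB : -1 <= B <= 1.
  have : 0 <= (r * v / (t * u)) ^+ 2 by apply: sqr_ge0.
  rewrite -hBB expr2 => h; apply/andP; split; nra.
have hG0 : 0 < G by rewrite /G; apply: divr_gt0 => //; apply: mulr_gt0 => //; apply: mulr_gt0 => //; lra.
have hGG : G * G * (2%:R * (2%:R * q + 1) ^+ 2 * (3%:R + 2%:R * q)) = 11%:R * q + 4%:R.
  have -> : G * G = (r * r) / ((s2 * s2) * (2%:R * q + 1) ^+ 2 * (t * t)).
    by rewrite /G; field; rewrite ?expr2; do ?(apply/andP; split); nra.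
  rewrite r2 s22 t2; field; rewrite ?expr2; do ?(apply/andP; split); nra.
have hG1 : G * G < 1.
  move: hGG; set D := (2%:R * (2%:R * q + 1) ^+ 2 * (3%:R + 2%:R * q)) => hGG.
  have hD : 11%:R * q + 4%:R < D by rewrite /D expr2; nra.
  nra.
have hG : -1 <= G <= 1 by apply/andP; split; nra.
have inA : A \in `[-1, 1] by rewrite in_itv /=.
have inB : B \in `[-1, 1] by rewrite in_itv /=.
have hAr0 := acos_ge0 hA.
have hArp := acos_lepi hA.
have pip := pi_gt0 R.
pose h := acos A / 2%:R.
have hdef : h = acos A / 2%:R by [].
have h0 : 0 <= h by rewrite hdef; lra.
have h1 : h <= pi / 2%:R by rewrite hdef; lra.
have c2 : cos h ^+ 2 *+ 2 - 1 = A.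
  rewrite -cos_mulr2n.
  have -> : h *+ 2 = acos A by rewrite /h mulr2n; field.
  by rewrite acosK.
have chp : 0 <= cos h by apply: cos_ge0_pihalf; rewrite /h; apply/andP; split; lra.
have shp : 0 <= sin h by apply: sin_ge0_pi; rewrite /h; apply/andP; split; lra.
have ch_val : cos h = r / (s2 * u).
  apply: sq_eq => //; first by apply: divr_ge0; [lra | apply: mulr_ge0; lra].
  have -> : (r / (s2 * u)) ^+ 2 = (r * r) / ((s2 * s2) * (u * u)) by field; do ?(apply/andP; split); lra.
  rewrite r2 s22 u2; move: c2; rewrite mulr2n => c2.
  have -> : cos h ^+ 2 = (1 + A) / 2%:R by rewrite -c2; field.
  rewrite /A; field; do ?(apply/andP; split); lra.
have sh_val : sin h = v / (s2 * u).
  apply: sq_eq => //; first by apply: divr_ge0; [lra | apply: mulr_ge0; lra].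
  have -> : (v / (s2 * u)) ^+ 2 = (v * v) / ((s2 * s2) * (u * u)) by field; do ?(apply/andP; split); lra.
  rewrite v2 s22 u2 sin2cos2; move: c2; rewrite mulr2n => c2.
  have -> : cos h ^+ 2 = (1 + A) / 2%:R by rewrite -c2; field.
  rewrite /A; field; do ?(apply/andP; split); lra.
pose a := acos B.
have ca : cos a = B by rewrite /a acosK.
have sa : sin a = r * v / (t * u).
  rewrite /a sin_acos // hBB sqrtr_sqr ger0_norm //.
  apply: divr_ge0; apply: mulr_ge0; lra.
have cosX : cos (h + a) = - G.
  rewrite cosD ch_val sh_val ca sa /B /G.
  have -> : r / (s2 * u) * ((q - 1) / (t * u)) - v / (s2 * u) * (r * v / (t * u))
     = r / (s2 * t) * ((q - 1) - v * v) / (u * u).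
    by field; do ?(apply/andP; split); lra.
  rewrite v2 u2; field; do ?(apply/andP; split); lra.
have sinX : 0 < sin (h + a).
  rewrite sinD ch_val sh_val ca sa /B.
  have -> : v / (s2 * u) * ((q - 1) / (t * u)) + r / (s2 * u) * (r * v / (t * u))
     = v / (s2 * t) * ((q - 1) + r * r) / (u * u).
    by field; do ?(apply/andP; split); lra.
  rewrite r2 u2; apply: divr_gt0; last by lra.
  apply: mulr_gt0; last by lra.
  by apply: divr_gt0 => //; apply: mulr_gt0.
have ha0 : 0 <= a by apply: acos_ge0.
have hap : a <= pi by apply: acos_lepi.
have hrange : 0 <= pi - (h + a) <= pi.
  apply/andP; split; last by lra.
  case: (lerP 0 (pi - (h + a))) => // hlt.
  have : sin (h + a) <= 0.
    have -> : h + a = (h + a - pi) + pi by ring.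
    rewrite sinDpi oppr_le0; apply: sin_ge0_pi; apply/andP; split; lra.
  lra.
have hX : acos G = pi - (h + a).
  have -> : G = cos (pi - (h + a)) by rewrite cosB cospi sinpi cosX; ring.
  by rewrite cosK // in_itv /=.
rewrite hX -/a; lra.
Qed.
End Trig.
Definition rotf (i : 'I_4) : 'I_4 := if unlift ord0 i is Some k then lift ord0 (nxt k) else ord0.
Lemma rotf0 : rotf ord0 = ord0. Proof. by rewrite /rotf unlift_none. Qed.
Lemma rotfl k : rotf (lift ord0 k) = lift ord0 (nxt k). Proof. by rewrite /rotf liftK. Qed.
Lemma nxt1 k : nxt k != k. Proof. by case: k => [[|[|[|]]] ?]. Qed.
Lemma nxt2 k : nxt (nxt k) != k. Proof. by case: k => [[|[|[|]]] ?]. Qed.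
Lemma nxt3 k : nxt (nxt k) != nxt k. Proof. by case: k => [[|[|[|]]] ?]. Qed.
Lemma nxtK k : nxt (nxt (nxt k)) = k. Proof. by apply/val_inj; case: k => [[|[|[|]]] ?]. Qed.
Lemma rotf_inj : injective rotf.
Proof.
apply: (can_inj (g := fun i => rotf (rotf i))) => i.
by case: (unliftP ord0 i) => [k ->|->]; rewrite ?rotf0 // !rotfl nxtK.
Qed.
Definition rot : {perm 'I_4} := perm rotf_inj.

Lemma liftne (k l : 'I_3) : k != l -> lift ord0 k != lift ord0 l.
Proof. by rewrite (inj_eq (@lift_inj _ ord0)). Qed.
Lemma lift0ne (k : 'I_3) : lift ord0 k != ord0.
Proof. by rewrite eq_sym neq_lift. Qed.

Lemma nsym (T : eqType) (x y : T) : x != y -> y != x.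
Proof. by rewrite eq_sym. Qed.

Section Main.
Variable R : realType.
Notation vec := 'rV[R]_4.

Definition hd (L : R) : R := let t := - L in ln (t + Num.sqrt (t ^+ 2 - 1)).
Lemma hdistE (x y : vec) : hdist x y = hd (lf x y). Proof. by []. Qed.

Definition HA (lvv luv lwv luw luu lww : R) : R :=
  acos ((luw + 2%:R * luv * lwv + luv * lwv * lvv) /
   Num.sqrt ((luu + 2%:R * luv ^+ 2 + luv ^+ 2 * lvv) *
             (lww + 2%:R * lwv ^+ 2 + lwv ^+ 2 * lvv))).
Lemma hangleE' (v u w : vec) : hangle v u w = HA (lf v v) (lf u v) (lf w v) (lf u w) (lf u u) (lf w w).
Proof. by rewrite hangleE. Qed.

Variables (b g : R).
Hypothesis hb : 0 < b.
Hypothesis hg : 0 < g.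
Hypothesis hrel : 4%:R * g ^+ 2 + 6%:R * b * g = 1 + b ^+ 2 / 2%:R.

Lemma Lvv_same i j : i != j -> lf (vv b g i j) (vv b g i j) = -1.
Proof. move=> h; rewrite lf_vv //; bsimp; ring. Qed.
Lemma Lvv_tri i j l : i != j -> i != l -> j != l -> lf (vv b g i j) (vv b g i l) = - (1 + q b).
Proof. move=> h1 h2 h3; rewrite lf_vv //; bsimp; ring. Qed.
Lemma Lvv_hh i j : i != j -> lf (vv b g i j) (vv b g j i) = - (1 + q b).
Proof. move=> h1; rewrite lf_vv //; bsimp; ring. Qed.
Lemma Lvv_x i j l : i != j -> i != l -> j != l -> lf (vv b g j i) (vv b g i l) = - 1 - 3%:R * q b.
Proof. move=> h1 h2 h3; rewrite lf_vv //; bsimp; ring. Qed.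

Lemma vv_H3 i j : i != j -> inH3 (vv b g i j).
Proof.
move=> h; split; first exact: Lvv_same.
rewrite /vv Em00 sum_wv; apply: mulr_gt0; first by rewrite invr_gt0 ltr0n.
have := hb; have := hg; lra.
Qed.

Lemma a_gt0 : 0 < hd (- (1 + q b)).
Proof.
rewrite /hd /=; apply: ln_gt0; have := qp hb; have := sqrtr_ge0 ((- - (1 + q b)) ^+ 2 - 1); lra.
Qed.

Lemma neg1 (x y c : R) : 0 < x -> 0 < y -> c < 0 -> x * (y * c) < 0.
Proof. by move=> hx hy hc; rewrite pmulr_rlt0 // pmulr_rlt0. Qed.

Lemma neg2 (x s y c : R) : 0 < x -> 0 < s -> 0 < y -> 0 < c -> x * (- s * y * c) < 0.
Proof. by move=> *; rewrite !mulNr mulrN oppr_lt0 !mulr_gt0. Qed.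

Lemma Sp : 0 < S b g. Proof. rewrite /S; have := hb; have := hg; lra. Qed.

Lemma tri_facts i j l m : i != j -> i != l -> i != m -> j != l -> j != m -> l != m ->
  hdist (vv b g i j) (vv b g i l) = hd (- (1 + q b)) /\
  hangle (vv b g i j) (vv b g i l) (vv b g i m) =
    HA (-1) (- (1 + q b)) (- (1 + q b)) (- (1 + q b)) (-1) (-1).
Proof.
move=> h1 h2 h3 h4 h5 h6; split; first by rewrite hdistE Lvv_tri.
rewrite hangleE' (Lvv_same h1) (Lvv_tri h2 h1 (nsym h4)) (Lvv_tri h3 h1 (nsym h5)).
by rewrite (Lvv_tri h2 h3 h6) (Lvv_same h2) (Lvv_same h3).
Qed.

Lemma KP_param (n : nat)
  (hC : cos (2 * pi / n%:R : R) = (8%:R * q b ^+ 2 - 1) / (2%:R * (2%:R * q b + 1) ^+ 2))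
  (hx : 0 <= 2 * (pi : R) / n%:R <= pi) :
  exists (v : 'I_4 -> 'I_4 -> 'rV[R]_4) (nt nh : 'I_4 -> 'rV[R]_4)
         (bb : 'I_3 -> 'rV[R]_4) (p n0 : 'rV[R]_4) (m : 'I_3 -> 'rV[R]_4),
    is_KP n v nt nh bb p n0 m /\ angle_condition nt nh n0 m.
Proof.
exists (vv b g), (ntv b g), (nhv b g), (fun k => vv b g ord0 (lift ord0 k)), (pv b g),
  (ntv b g ord0), (fun k => mv b g (lift ord0 k)).
split; [split; [|split]|].
- split; first by move=> i j h; exact: vv_H3.
  split.
    move=> i; split; first exact: L_ntnt.
    move=> i' j hij; split.
      move/eqP=> ei; subst i'; rewrite /ntv lfZl lf_ntv //; bsimp; ring.
    move=> hi'; rewrite /ntv lfZl lf_ntv //.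
    have hT : 0 < (Num.sqrt (Tn b))^-1 by rewrite invr_gt0 sTp.
    have hSb : 0 < S b g * b by apply: mulr_gt0; [exact: Sp | exact: hb].
    case: (eqVneq j i) => [ej|hji]; [subst j|]; bsimp; apply: neg1 => //; lra.
  split.
    move=> k; split; first exact: L_nhnh_eq.
    move=> i j hij; split.
      by move/andP=> [hik hjk]; rewrite /nhv lfZl lf_nhv //; bsimp; ring.
    move=> h; rewrite /nhv lfZl lf_nhv //.
    have hH : 0 < (Num.sqrt (Hn b))^-1 by rewrite invr_gt0 sHp.
    case/orP: h => /eqP ek; subst k; bsimp; apply: neg2 => //; try exact: Sp; lra.
  split.
    move=> i; exists (hd (- (1 + q b))); split; first exact: a_gt0.
    exists (HA (-1) (- (1 + q b)) (- (1 + q b)) (- (1 + q b)) (-1) (-1)).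
    move=> j l m /and5P [h1 h2 h3 h4 /andP [h5 h6]]; exact: tri_facts.
  split.
    move=> k; exists (hd (- (1 + q b))); split; first exact: a_gt0.
    exists (HA (-1) (- (1 + q b)) (- (1 + q b)) (- 1 - 3%:R * q b) (-1) (-1)).
    move=> i j l /and5P [hij hil hjl hik /andP [hjk hlk]]; split.
    - by rewrite hdistE Lvv_hh.
    - by rewrite hdistE Lvv_tri.
    - rewrite hangleE' (Lvv_same hij) (Lvv_hh (nsym hij)) (Lvv_tri hil hij (nsym hjl)).
      by rewrite (Lvv_x hij hil hjl) (Lvv_same (nsym hij)) (Lvv_same hil).
  move=> s; exists (Aperm R s); split; first exact: Aperm_iso.
  by move=> i j _; rewrite /vv wvE_perm.
- have F : forall k : 'I_3, [/\ lift ord0 k != ord0, lift ord0 (nxt k) != ord0,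
      lift ord0 (nxt (nxt k)) != ord0, lift ord0 k != lift ord0 (nxt k) &
      [/\ lift ord0 k != lift ord0 (nxt (nxt k)), lift ord0 (nxt k) != lift ord0 (nxt (nxt k)),
       ord0 != lift ord0 k, ord0 != lift ord0 (nxt k) & ord0 != lift ord0 (nxt (nxt k))]].
    move=> k; split; rewrite ?lift0ne //; try split; rewrite ?(nsym (lift0ne _)) //.
    - by apply: liftne; rewrite nsym // nxt1.
    - by apply: liftne; rewrite nsym // nxt2.
    - by apply: liftne; rewrite nsym // nxt3.
  split.
    move=> k; have [f1 f2 f3 f12 [f13 f23 g1 g2 g3]] := F k.
    by split; [apply: vv_H3 | apply: L_pv].
  split.
    exists (hd (- (1 + q b))); split; first exact: a_gt0.
    exists (HA (-1) (- (1 + q b)) (- (1 + q b)) (- (1 + q b)) (-1) (-1)).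
    move=> k; have [f1 f2 f3 f12 [f13 f23 g1 g2 g3]] := F k.
    by apply: tri_facts.
  split; first exact: L_ntnt.
  split; first by move=> k; have [f1 f2 f3 f12 [f13 f23 g1 g2 g3]] := F k; apply: L_ntv0.
  split; first exact: L_ntp.
  split.
    move=> k; have [f1 f2 f3 f12 [f13 f23 g1 g2 g3]] := F k.
    by split; [apply: L_mm | apply: L_mvv | apply: L_mvv | apply: L_mp | apply: L_mvvj].
  split.
    exists (Aperm R rot); split; first exact: Aperm_iso.
    split.
      rewrite /pv mulmxDl -!scalemxAl /cv wvE_perm.
      by rewrite /ntr wvE_perm !permE rotf0.
    by move=> k; rewrite /vv wvE_perm !permE rotf0 rotfl.
  move=> k l hkl; have f1 := lift0ne k; have f2 := lift0ne l; have f3 := liftne hkl.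
  rewrite /dihedral L_mmn // opprK -hC cosK //.
- move=> i; exists (Aperm R (tperm ord0 i)); split; first exact: Aperm_iso.
  exists (fun k => tperm ord0 i (lift ord0 k)); split; [|split].
  + by move=> x y /perm_inj /lift_inj.
  + move=> k; have e : i = tperm ord0 i ord0 by rewrite tpermL.
    rewrite [X in _ != X]e (inj_eq perm_inj); exact: lift0ne.
  + by move=> k; rewrite /vv wvE_perm tpermL.
- exists (acos ((5%:R * q b + 1) / (6%:R * q b + 3%:R))),
    (acos ((q b - 1) / (Num.sqrt (3%:R + 2%:R * q b) * Num.sqrt (3%:R + 6%:R * q b)))),
    (acos (Gv b)).
  split; first by move=> k l hkl; rewrite /dihedral L_nhnh // opprK.
  split; first by move=> i k hik; rewrite /dihedral L_ntnh // opprK.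
  split; first by move=> k; rewrite /dihedral L_ntm ?lift0ne // opprK.
  rewrite /Gv; exact: angle_main (qp hb).
Qed.



End Main.
Unset Implicit Arguments.
Theorem mainTheorem14 (R : realType) (n : nat) (hn : (4 <= n)%N) :
  exists (v : 'I_4 -> 'I_4 -> 'rV[R]_4) (nt nh : 'I_4 -> 'rV[R]_4)
         (b : 'I_3 -> 'rV[R]_4) (p n0 : 'rV[R]_4) (m : 'I_3 -> 'rV[R]_4),
    is_KP n v nt nh b p n0 m /\ angle_condition nt nh n0 m.
Proof.
have n4 : (4%:R : R) <= n%:R by rewrite ler_nat.
have npos : (0 : R) < n%:R by lra.
have pip := pi_gt0 R.
pose x : R := pi / n%:R.
have x0 : 0 < x by rewrite /x divr_gt0.
have hxn : x * n%:R = pi by rewrite /x; field; lra.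
have x4 : x * 4%:R <= pi by nra.
have e2 : 2 * pi / n%:R = x *+ 2 by rewrite /x mulr2n; field; lra.
have cos2 : cos (2 * pi / n%:R) = 2%:R * cos x ^+ 2 - 1 by rewrite e2 cos_mulr2n mulr2n; ring.
have c0 : 0 <= cos x by apply: cos_ge0_pihalf; apply/andP; split; lra.
have c20 : 0 <= cos (x *+ 2) by apply: cos_ge0_pihalf; rewrite [x *+ 2]mulr2n; apply/andP; split; lra.
have c1 : cos x < 1.
  have hx1 : x \in `[0, pi] by rewrite in_itv /=; apply/andP; split; lra.
  have h01 : (0:R) \in `[0, pi] by rewrite in_itv /=; apply/andP; split; lra.
  by rewrite -cos0 (ltr_cos h01 hx1).
have hx : 0 <= 2 * (pi : R) / n%:R <= pi by rewrite e2 [x *+ 2]mulr2n; apply/andP; split; lra.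
have chalf : 1 < 2%:R * cos x.
  rewrite -e2 cos2 in c20; nra.
pose w := 2%:R * cos x.
pose q0 := (w - 1) / (4%:R - 2%:R * w).
have q0p : 0 < q0 by rewrite /q0 divr_gt0 // /w; lra.
pose b := Num.sqrt q0.
have hb : 0 < b by rewrite /b sqrtr_gt0.
have hbb : b ^+ 2 = q0 by rewrite /b sqr_sqrtr // ltW.
pose r := Num.sqrt (44%:R * q0 + 16%:R).
have rp : 0 < r by rewrite /r sqrtr_gt0; lra.
have rr : r * r = 44%:R * q0 + 16%:R by rewrite /r -expr2 sqr_sqrtr //; lra.
pose g := (r - 6%:R * b) / 8%:R.
have bb : b * b = q0 by rewrite -expr2.
have hg : 0 < g by rewrite /g; nra.
have hrel : 4%:R * g ^+ 2 + 6%:R * b * g = 1 + b ^+ 2 / 2%:R.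
  rewrite /g !expr2; lra.
have hC : cos (2 * pi / n%:R : R) = (8%:R * q b ^+ 2 - 1) / (2%:R * (2%:R * q b + 1) ^+ 2).
  rewrite cos2 /q hbb /q0 -/w.
  have w1 : 1 < w by [].
  have w2 : w < 2%:R by rewrite /w; lra.
  have -> : cos x = w / 2%:R by rewrite /w; field.
  field; rewrite ?expr2; do ?(apply/andP; split); nra.
exact: (KP_param hb hg hrel hC hx).
Qed.
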